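(* Let $G$ be a cubical $\omega$-category with connections. For each $n\ge0$, the set $\Phi_n(G_n)$ is an $\omega$-category with the following structure: for $0\le p<n$, $d^\alpha_px=\varepsilon_1^{n-p}(\partial^\alpha_1)^{n-p}x$ and $x\#_py=x\circ_{n-p}y$ where defined; for $p\ge n$, $d^\alpha_px=x$ and the only composites are $x\#_px=x$. Moreover $\varepsilon_1$ maps $\Phi_n(G_n)$ into $\Phi_{n+1}(G_{n+1})$, giving a sequence of $\omega$-categories and homomorphisms $\Phi_0(G_0)\xrightarrow{\varepsilon_1}\Phi_1(G_1)\xrightarrow{\varepsilon_1}\Phi_2(G_2)\to\cdots$.
   Context: An $\omega$-category is a set $X$ with unary operations $d^-_p,d^+_p$ and partial binary operations $\#_p$ ($p\ge0$) such that: $x\#_py$ is defined iff $d^+_px=d^-_py$; $d^\beta_qd^\alpha_px=d^\beta_qx$ for $q<p$ and $=d^\alpha_px$ for $q\ge p$; if $x\#_py$ is defined then $d^-_p(x\#_py)=d^-_px$, $d^+_p(x\#_py)=d^+_py$, $d^\beta_q(x\#_py)=d^\beta_qx\#_pd^\beta_qy$ ($q\ne p$); $d^-_px\#_px=x\#_pd^+_px=x$; $\#_p$ is associative; for $p\ne q$, $(x\#_py)\#_q(x'\#_py')=(x\#_qx')\#_p(y\#_qy')$ whenever both sides are defined; each $x$ has a dimension $\dim x$ with $d^\alpha_px=x$ iff $p\ge\dim x$. Homomorphisms preserve all operations. A cubical $\omega$-category with connections $G$ consists of sets $G_n$ ($n\ge0$), face maps $\partial^\alpha_i:G_n\to G_{n-1}$,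 degeneracies $\varepsilon_i:G_{n-1}\to G_n$, connections $\Gamma^\alpha_i:G_n\to G_{n+1}$ ($1\le i\le n$, $\alpha=\pm$) and partial compositions $\circ_j$ on $G_n$ ($1\le j\le n$, $a\circ_jb$ defined iff $\partial^+_ja=\partial^-_jb$) satisfying: $\partial^\alpha_i\partial^\beta_j=\partial^\beta_{j-1}\partial^\alpha_i$ ($i<j$), $\varepsilon_i\varepsilon_j=\varepsilon_{j+1}\varepsilon_i$ ($i\le j$), $\partial^\alpha_i\varepsilon_j=\varepsilon_{j-1}\partial^\alpha_i$ ($i<j$), $\varepsilon_j\partial^\alpha_{i-1}$ ($i>j$), $\mathrm{id}$ ($i=j$); $\Gamma^\alpha_i\Gamma^\beta_j=\Gamma^\beta_{j+1}\Gamma^\alpha_i$ ($i<j$), $\Gamma^\alpha_i\Gamma^\alpha_i=\Gamma^\alpha_{i+1}\Gamma^\alpha_i$, $\Gamma^\alpha_i\varepsilon_j=\varepsilon_{j+1}\Gamma^\alpha_i$ ($i<j$), $\varepsilon_j\Gamma^\alpha_{i-1}$ ($i>j$), $\Gamma^\alpha_j\varepsilon_j=\varepsilon_{j+1}\varepsilon_j$, $\partial^\alpha_i\Gamma^\beta_j=\Gamma^\beta_{j-1}\partial^\alpha_i$ ($i<j$), $\Gamma^\beta_j\partial^\alpha_{i-1}$ ($i>j+1$), $\partial^\alpha_j\Gamma^\alpha_j=\partial^\alpha_{j+1}\Gamma^\alpha_j=\mathrm{id}$, $\partial^\alpha_j\Gamma^{-\alpha}_j=\partial^\alpha_{j+1}\Gamma^{-\alpha}_j=\varepsilon_j\partial^\alpha_j$;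 $\partial^-_j(a\circ_jb)=\partial^-_ja$, $\partial^+_j(a\circ_jb)=\partial^+_jb$, $\partial^\alpha_i(a\circ_jb)=\partial^\alpha_ia\circ_{j-1}\partial^\alpha_ib$ ($i<j$), $\partial^\alpha_ia\circ_j\partial^\alpha_ib$ ($i>j$); interchange $(a\circ_ib)\circ_j(c\circ_id)=(a\circ_jc)\circ_i(b\circ_jd)$ for $i\ne j$; $\varepsilon_i(a\circ_jb)=\varepsilon_ia\circ_{j+1}\varepsilon_ib$ ($i\le j$), $\varepsilon_ia\circ_j\varepsilon_ib$ ($i>j$); $\Gamma^\alpha_i(a\circ_jb)=\Gamma^\alpha_ia\circ_{j+1}\Gamma^\alpha_ib$ ($i<j$), $\Gamma^\alpha_ia\circ_j\Gamma^\alpha_ib$ ($i>j$); $\Gamma^+_j(a\circ_jb)=(\Gamma^+_ja\circ_j\varepsilon_ja)\circ_{j+1}(\varepsilon_{j+1}a\circ_j\Gamma^+_jb)$, $\Gamma^-_j(a\circ_jb)=(\Gamma^-_ja\circ_j\varepsilon_{j+1}b)\circ_{j+1}(\varepsilon_jb\circ_j\Gamma^-_jb)$; each $\circ_j$ is a category structure with identities $\varepsilon_jy$; $\Gamma^+_ix\circ_i\Gamma^-_ix=\varepsilon_{i+1}x$, $\Gamma^+_ix\circ_{i+1}\Gamma^-_ix=\varepsilon_ix$. Folding operations on $G_n$: $\psi_ix=\Gamma^+_i\partial^-_{i+1}x\circ_{i+1}x\circ_{i+1}\Gamma^-_i\partial^+_{i+1}x$ ($1\le i\le n-1$), $\Psi_r=\psi_{r-1}\cdots\psi_1$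 ($1\le r\le n$), $\Phi_n=\Psi_1\Psi_2\cdots\Psi_n$ (so $\Phi_0=\Phi_1=\mathrm{id}$). *)

(* Defs.v *)
From mathcomp Require Import all_boot.

(* Conventions: signs alpha are booleans, true = +, false = -.
   Indices are 1-based as in the paper.
   fc G n i a : G_{n+1} -> G_n      is  \partial^a_i   (1 <= i <= n+1)
   dg G n i   : G_n -> G_{n+1}      is  \varepsilon_i  (1 <= i <= n+1)
   cn G n i a : G_n -> G_{n+1}      is  \Gamma^a_i     (1 <= i <= n)
   cp G n j   : G_{n+1} -> G_{n+1} -> G_{n+1} is \circ_j (1 <= j <= n+1),
     a total function whose value is only meaningful (and only constrained)
     when  fc n j true a = fc n j false b, i.e. when a \circ_j b is defined. *)

Record cubical_omega_cat := {
  C : nat -> Type;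
  fc : forall n : nat, nat -> bool -> C n.+1 -> C n;
  dg : forall n : nat, nat -> C n -> C n.+1;
  cn : forall n : nat, nat -> bool -> C n -> C n.+1;
  cp : forall n : nat, nat -> C n.+1 -> C n.+1 -> C n.+1;

  fc_fc : forall n i j a b (x : C n.+2), 1 <= i -> i < j -> j <= n.+2 ->
    fc n i a (fc n.+1 j b x) = fc n j.-1 b (fc n.+1 i a x);
  dg_dg : forall n i j (x : C n), 1 <= i -> i <= j -> j <= n.+1 ->
    dg n.+1 i (dg n j x) = dg n.+1 j.+1 (dg n i x);
  fc_dg_lt : forall n i j a (x : C n.+1), 1 <= i -> i < j -> j <= n.+2 ->
    fc n.+1 i a (dg n.+1 j x) = dg n j.-1 (fc n i a x);
  fc_dg_gt : forall n i j a (x : C n.+1), 1 <= j -> j < i -> i <= n.+2 ->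
    fc n.+1 i a (dg n.+1 j x) = dg n j (fc n i.-1 a x);
  fc_dg_eq : forall n i a (x : C n), 1 <= i -> i <= n.+1 ->
    fc n i a (dg n i x) = x;
  cn_cn_lt : forall n i j a b (x : C n), 1 <= i -> i < j -> j <= n ->
    cn n.+1 i a (cn n j b x) = cn n.+1 j.+1 b (cn n i a x);
  cn_cn_eq : forall n i a (x : C n), 1 <= i -> i <= n ->
    cn n.+1 i a (cn n i a x) = cn n.+1 i.+1 a (cn n i a x);
  cn_dg_lt : forall n i j a (x : C n), 1 <= i -> i < j -> j <= n.+1 ->
    cn n.+1 i a (dg n j x) = dg n.+1 j.+1 (cn n i a x);
  cn_dg_gt : forall n i j a (x : C n), 1 <= j -> j < i -> i <= n.+1 ->
    cn n.+1 i a (dg n j x) = dg n.+1 j (cn n i.-1 a x);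
  cn_dg_eq : forall n j a (x : C n), 1 <= j -> j <= n.+1 ->
    cn n.+1 j a (dg n j x) = dg n.+1 j.+1 (dg n j x);
  fc_cn_lt : forall n i j a b (x : C n.+1), 1 <= i -> i < j -> j <= n.+1 ->
    fc n.+1 i a (cn n.+1 j b x) = cn n j.-1 b (fc n i a x);
  fc_cn_gt : forall n i j a b (x : C n.+1), 1 <= j -> j.+1 < i -> i <= n.+2 ->
    fc n.+1 i a (cn n.+1 j b x) = cn n j b (fc n i.-1 a x);
  fc_cn_same : forall n j a (x : C n), 1 <= j -> j <= n ->
    fc n j a (cn n j a x) = x /\ fc n j.+1 a (cn n j a x) = x;
  fc_cn_opp : forall n j a (x : C n.+1), 1 <= j -> j <= n.+1 ->
    fc n.+1 j a (cn n.+1 j (~~ a) x) = dg n j (fc n j a x) /\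
    fc n.+1 j.+1 a (cn n.+1 j (~~ a) x) = dg n j (fc n j a x);

  fc_cp_eq : forall n j (a b : C n.+1), 1 <= j -> j <= n.+1 ->
    fc n j true a = fc n j false b ->
    fc n j false (cp n j a b) = fc n j false a /\
    fc n j true (cp n j a b) = fc n j true b;
  fc_cp_lt : forall n i j al (a b : C n.+2), 1 <= i -> i < j -> j <= n.+2 ->
    fc n.+1 j true a = fc n.+1 j false b ->
    fc n.+1 i al (cp n.+1 j a b) = cp n j.-1 (fc n.+1 i al a) (fc n.+1 i al b);
  fc_cp_gt : forall n i j al (a b : C n.+2), 1 <= j -> j < i -> i <= n.+2 ->
    fc n.+1 j true a = fc n.+1 j false b ->
    fc n.+1 i al (cp n.+1 j a b) = cp n j (fc n.+1 i al a) (fc n.+1 i al b);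
  cp_interchange : forall n i j (a b c d : C n.+1),
    1 <= i -> i <= n.+1 -> 1 <= j -> j <= n.+1 -> i != j ->
    fc n i true a = fc n i false b -> fc n i true c = fc n i false d ->
    fc n j true a = fc n j false c -> fc n j true b = fc n j false d ->
    cp n j (cp n i a b) (cp n i c d) = cp n i (cp n j a c) (cp n j b d);
  dg_cp_le : forall n i j (a b : C n.+1), 1 <= i -> i <= j -> j <= n.+1 ->
    fc n j true a = fc n j false b ->
    dg n.+1 i (cp n j a b) = cp n.+1 j.+1 (dg n.+1 i a) (dg n.+1 i b);
  dg_cp_gt : forall n i j (a b : C n.+1), 1 <= j -> j < i -> i <= n.+2 ->
    fc n j true a = fc n j false b ->
    dg n.+1 i (cp n j a b) = cp n.+1 j (dg n.+1 i a) (dg n.+1 i b);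
  cn_cp_lt : forall n i j al (a b : C n.+1), 1 <= i -> i < j -> j <= n.+1 ->
    fc n j true a = fc n j false b ->
    cn n.+1 i al (cp n j a b) = cp n.+1 j.+1 (cn n.+1 i al a) (cn n.+1 i al b);
  cn_cp_gt : forall n i j al (a b : C n.+1), 1 <= j -> j < i -> i <= n.+1 ->
    fc n j true a = fc n j false b ->
    cn n.+1 i al (cp n j a b) = cp n.+1 j (cn n.+1 i al a) (cn n.+1 i al b);
  cn_cp_plus : forall n j (a b : C n.+1), 1 <= j -> j <= n.+1 ->
    fc n j true a = fc n j false b ->
    cn n.+1 j true (cp n j a b) =
    cp n.+1 j.+1 (cp n.+1 j (cn n.+1 j true a) (dg n.+1 j a))
                 (cp n.+1 j (dg n.+1 j.+1 a) (cn n.+1 j true b));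
  cn_cp_minus : forall n j (a b : C n.+1), 1 <= j -> j <= n.+1 ->
    fc n j true a = fc n j false b ->
    cn n.+1 j false (cp n j a b) =
    cp n.+1 j.+1 (cp n.+1 j (cn n.+1 j false a) (dg n.+1 j.+1 b))
                 (cp n.+1 j (dg n.+1 j b) (cn n.+1 j false b));
  cp_assoc : forall n j (a b c : C n.+1), 1 <= j -> j <= n.+1 ->
    fc n j true a = fc n j false b -> fc n j true b = fc n j false c ->
    cp n j (cp n j a b) c = cp n j a (cp n j b c);
  cp_unit : forall n j (a : C n.+1), 1 <= j -> j <= n.+1 ->
    cp n j (dg n j (fc n j false a)) a = a /\
    cp n j a (dg n j (fc n j true a)) = a;
  cn_cp_inv : forall n i (x : C n.+1), 1 <= i -> i <= n.+1 ->
    cp n.+1 i (cn n.+1 i true x) (cn n.+1 i false x) = dg n.+1 i.+1 x /\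
    cp n.+1 i.+1 (cn n.+1 i true x) (cn n.+1 i false x) = dg n.+1 i x
}.

(* omega-categories, on a subset S of a type X.  Partial compositions are
   given as a relation  c p x y z  meaning "x #_p y is defined and equals z". *)
Definition omega_cat {X : Type} (S : X -> Prop) (d : nat -> bool -> X -> X)
    (c : nat -> X -> X -> X -> Prop) : Prop :=
  (forall p a x, S x -> S (d p a x)) /\
  (forall p x y z, S x -> S y -> c p x y z -> S z) /\
  (forall p x y z z', S x -> S y -> c p x y z -> c p x y z' -> z = z') /\
  (forall p x y, S x -> S y -> ((exists z, c p x y z) <-> d p true x = d p false y)) /\
  (forall p q a b x, S x -> q < p -> d q b (d p a x) = d q b x) /\
  (forall p q a b x, S x -> p <= q -> d q b (d p a x) = d p a x) /\
  (forall p x y z, S x -> S y -> c p x y z ->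
     d p false z = d p false x /\ d p true z = d p true y) /\
  (forall p q b x y z, S x -> S y -> c p x y z -> q != p ->
     c p (d q b x) (d q b y) (d q b z)) /\
  (forall p x, S x -> c p (d p false x) x x /\ c p x (d p true x) x) /\
  (forall p x y z xy yz, S x -> S y -> S z -> c p x y xy -> c p y z yz ->
     exists w, c p xy z w /\ c p x yz w) /\
  (forall p q x y x' y' xy x'y' w xx' yy' w', p != q ->
     S x -> S y -> S x' -> S y' ->
     c p x y xy -> c p x' y' x'y' -> c q xy x'y' w ->
     c q x x' xx' -> c q y y' yy' -> c p xx' yy' w' -> w = w') /\
  (forall x, S x -> exists m, forall p a, d p a x = x <-> m <= p).

Definition omega_hom {X Y : Type} (S : X -> Prop) (d : nat -> bool -> X -> X)
    (c : nat -> X -> X -> X -> Prop) (S' : Y -> Prop)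
    (d' : nat -> bool -> Y -> Y) (c' : nat -> Y -> Y -> Y -> Prop)
    (f : X -> Y) : Prop :=
  (forall x, S x -> S' (f x)) /\
  (forall p a x, S x -> f (d p a x) = d' p a (f x)) /\
  (forall p x y z, S x -> S y -> c p x y z -> c' p (f x) (f y) (f z)).

Section Folding.
Variable G : cubical_omega_cat.

Definition psi (n i : nat) (x : C G n.+2) : C G n.+2 :=
  cp G n.+1 i.+1
    (cp G n.+1 i.+1 (cn G n.+1 i true (fc G n.+1 i.+1 false x)) x)
    (cn G n.+1 i false (fc G n.+1 i.+1 true x)).

(* psi_i on G_n (identity in dimensions 0, 1 where no psi_i exists) *)
Definition psiG (n : nat) : nat -> C G n -> C G n :=
  match n as k return nat -> C G k -> C G k with
  | S (S m) => psi m
  | _ => fun _ x => x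
  end.

(* Psi_r = psi_{r-1} ... psi_1  (Psi_1 = id) *)
Fixpoint Psi (n r : nat) (x : C G n) : C G n :=
  match r with
  | 0 => x
  | S r' => match r' with 0 => x | _ => psiG n r' (Psi n r' x) end
  end.

(* Psi_1 Psi_2 ... Psi_k *)
Fixpoint PhiAux (n k : nat) (x : C G n) : C G n :=
  match k with
  | 0 => x
  | S k' => PhiAux n k' (Psi n k'.+1 x)
  end.

Definition Phi (n : nat) (x : C G n) : C G n := PhiAux n n x.

Definition PhiImage (n : nat) (y : C G n) : Prop := exists x, Phi n x = y.

(* collapse k m a = eps_1^k (partial^a_1)^k on G_m  (for k <= m) *)
Fixpoint collapse (k : nat) : forall m : nat, bool -> C G m -> C G m :=
  match k with
  | 0 => fun m a x => x
  | S k' => fun m => match m as m0 return bool -> C G m0 -> C G m0 with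
                     | 0 => fun a x => x
                     | S m' => fun a x => dg G m' 1 (collapse k' m' a (fc G m' 1 a x))
                     end
  end.

Definition dPhi (n p : nat) (a : bool) (x : C G n) : C G n :=
  if p < n then collapse (n - p) n a x else x.

Definition compPhi (n : nat) : nat -> C G n -> C G n -> C G n -> Prop :=
  match n as k return nat -> C G k -> C G k -> C G k -> Prop with
  | 0 => fun p x y z => x = y /\ z = x
  | S m => fun p x y z =>
      if p < m.+1 then
        fc G m (m.+1 - p) true x = fc G m (m.+1 - p) false y /\
        z = cp G m (m.+1 - p) x y
      else x = y /\ z = x
  end.

End Folding.

(* Main.v *)
Require Import Defs.
From mathcomp Require Import all_boot zify.
From Stdlib Require Import Classical.

Section S.
Variable G : cubical_omega_cat.
Local Notation F := (Defs.fc G).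
Local Notation D := (Defs.dg G).

Fixpoint Deg (k : nat) : forall m, C G m -> Prop :=
  match k with
  | 0 => fun _ _ => True
  | S k' => fun m => match m as m0 return C G m0 -> Prop with
                     | 0 => fun _ => False
                     | S m' => fun y => exists w, y = D m' 1 w /\ Deg k' m' w
                     end
  end.

Set Implicit Arguments. Unset Strict Implicit.
Lemma Deg_le k m (y : C G m) : Deg k m y -> k <= m.
Proof.
elim: k m y => [//|k IH] [|m] y //= [w [_ Hw]].
by have := IH _ _ Hw.
Qed.

Lemma Deg_dg_up k m (v : C G m) : Deg k m v -> Deg k.+1 m.+1 (D m k.+1 v).
Proof.
elim: k m v => [|k IH] m v /=.
  by move=> _; exists v.
case: m v => [//|m] v [w [Hy Hw]]; subst v.
have Hle := Deg_le Hw.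
exists (D m k.+1 w); split; last exact: IH.
by rewrite (dg_dg G m 1 k.+1 w) //; lia.
Qed.

Lemma Deg_face_high k m (y : C G m.+1) i a :
  Deg k m.+1 y -> k < i -> i <= m.+1 -> Deg k m (F m i a y).
Proof.
elim: k m y i => [//|k IH] m y i /= [w [Hy Hw]]; subst y; move=> Hki Him.
case: m w Hw Him IH => [|m] w Hw Him IH; first by lia.
rewrite (fc_dg_gt G m i 1 a w) //; try lia.
exists (F m i.-1 a w); split => //.
apply: IH => //; lia.
Qed.

Lemma Deg_face_low k m (y : C G m.+1) i a :
  Deg k m.+1 y -> 1 <= i -> i <= k -> Deg k.-1 m (F m i a y).
Proof.
elim: k m y i => [|k IH] m y i /=; first by lia.
move=> [w [Hy Hw]] Hi Hik; subst y.
case: (ltnP 1 i) => Hi1; last first.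
  have -> : i = 1 by lia.
  by rewrite (fc_dg_eq G m 1 a w).
case: m w Hw IH => [|m] w Hw IH.
  by have := Deg_le Hw; lia.
rewrite (fc_dg_gt G m i 1 a w) //; try (have := Deg_le Hw; lia).
case: k IH Hw Hik => [|k] IH Hw Hik; first by lia.
exists (F m i.-1 a w); split => //.
have := IH m w i.-1 Hw; apply; lia.
Qed.

Lemma Deg_dg k m (y : C G m.+1) i :
  Deg k m.+1 y -> 1 <= i -> i <= k -> exists t, y = D m i t.
Proof.
elim: k m y i => [|k IH] m y i /=; first by lia.
move=> [w [Hy Hw]] Hi Hik; subst y.
case: (ltnP 1 i) => Hi1; last first.
  by exists w; have -> : i = 1 by lia.
case: m w Hw => [|m] w Hw.
  by case: k Hw IH Hik => [|k] //=; lia.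
have [t ->] := IH m w i.-1 Hw ltac:(lia) ltac:(lia).
have Hle := Deg_le Hw.
exists (D m 1 t).
rewrite (dg_dg G m 1 i.-1 t) //; try lia.
by rewrite prednK //; lia.
Qed.
Local Notation P := (Defs.cp G).
Local Notation Gm := (Defs.cn G).

Definition Kp (n : nat) : C G n -> Prop :=
  match n with
  | 0 => fun _ => True
  | S m => fun x => forall i a, i.+2 <= m.+1 -> Deg i.+1 m (F m i.+2 a x)
  end.

Lemma dg_inj m i (u v : C G m) : 1 <= i -> i <= m.+1 -> D m i u = D m i v -> u = v.
Proof.
move=> H1 H2 E.
by rewrite -(fc_dg_eq G m i true u) // -(fc_dg_eq G m i true v) // E.
Qed.

Lemma Deg_comp k m (y1 y2 : C G m.+1) j :
  Deg k m.+1 y1 -> Deg k m.+1 y2 -> k < j -> j <= m.+1 ->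
  F m j true y1 = F m j false y2 -> Deg k m.+1 (P m j y1 y2).
Proof.
elim: k m y1 y2 j => [//|k IH] m y1 y2 j /=.
move=> [w1 [E1 H1]] [w2 [E2 H2]] Hkj Hjm; subst y1 y2.
case: m w1 w2 H1 H2 Hjm => [|m] w1 w2 H1 H2 Hjm; first by lia.
rewrite (fc_dg_gt G m j 1 true w1) //; try lia.
rewrite (fc_dg_gt G m j 1 false w2) //; try lia.
move/dg_inj => Ef; have {}Ef := Ef ltac:(lia) ltac:(lia).
have Ej : j = j.-1.+1 by lia.
rewrite Ej -(dg_cp_le G m 1 j.-1 w1 w2) //; try lia.
exists (P m j.-1 w1 w2); split => //.
apply: IH => //; lia.
Qed.

Lemma Deg_comp_idem k m (y1 y2 : C G m.+1) j :
  Deg k m.+1 y1 -> Deg k m.+1 y2 -> 1 <= j -> j <= k ->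
  F m j true y1 = F m j false y2 -> P m j y1 y2 = y1.
Proof.
elim: k m y1 y2 j => [|k IH] m y1 y2 j /=; first by lia.
move=> [w1 [E1 H1]] [w2 [E2 H2]] Hj Hjk; subst y1 y2.
have Hle := Deg_le H1.
case: (ltnP 1 j) => Hj1; last first.
  have -> : j = 1 by lia.
  rewrite !(fc_dg_eq G m 1) // => E; subst w2.
  have := (cp_unit G m 1 (D m 1 w1) isT ltac:(lia)).1.
  by rewrite (fc_dg_eq G m 1).
case: m w1 w2 H1 H2 Hle => [|m] w1 w2 H1 H2 Hle; first by lia.
rewrite (fc_dg_gt G m j 1 true w1) //; try lia.
rewrite (fc_dg_gt G m j 1 false w2) //; try lia.
move/dg_inj => Ef; have {}Ef := Ef ltac:(lia) ltac:(lia).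
have Ej : j = j.-1.+1 by lia.
rewrite Ej -(dg_cp_le G m 1 j.-1 w1 w2) //; try lia.
rewrite (IH m w1 w2 j.-1) //; lia.
Qed.

Lemma psi_fix m i (x : C G m.+2) : 1 <= i -> i <= m.+1 ->
  (forall a, exists t, F m.+1 i.+1 a x = D m i t) -> psi G m i x = x.
Proof.
move=> H1 H2 H.
have [t0 E0] := H false; have [t1 E1] := H true.
rewrite /psi E0 E1 (cn_dg_eq G m i true t0) // (cn_dg_eq G m i false t1) //.
rewrite -E0 -E1 (cp_unit G m.+1 i.+1 x isT ltac:(lia)).1.
by rewrite (cp_unit G m.+1 i.+1 x isT ltac:(lia)).2.
Qed.

Lemma psi_face_eq m i a (y : C G m.+2) : 1 <= i -> i <= m.+1 ->
  F m.+1 i.+1 a (psi G m i y) = D m i (F m i a (F m.+1 i a y)).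
Proof.
move=> H1 H2; rewrite /psi.
set u := F m.+1 i.+1 false y; set v := F m.+1 i.+1 true y.
set A := Gm m.+1 i true u; set B := Gm m.+1 i false v.
have hA : F m.+1 i.+1 true A = u := (fc_cn_same G m.+1 i true u H1 ltac:(lia)).2.
have hB : F m.+1 i.+1 false B = v := (fc_cn_same G m.+1 i false v H1 ltac:(lia)).2.
have [e1 e2] := fc_cp_eq G m.+1 i.+1 A y isT ltac:(lia) hA.
have h2 : F m.+1 i.+1 true (P m.+1 i.+1 A y) = F m.+1 i.+1 false B by rewrite e2 hB.
have [e3 e4] := fc_cp_eq G m.+1 i.+1 _ _ isT ltac:(lia) h2.
rewrite -(fc_fc G m i i.+1 a a y) //; try lia.
case: a.
  rewrite e4 /B.
  exact: (fc_cn_opp G m i true v H1 H2).2.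
rewrite e3 e1 /A.
exact: (fc_cn_opp G m i false u H1 H2).2.
Qed.
Lemma psi_face_gt m i r a (y : C G m.+3) : 1 <= i -> i.+1 < r -> r <= m.+3 ->
  F m.+2 r a (psi G m.+1 i y) = psi G m i (F m.+2 r a y).
Proof.
move=> H1 H2 H3; rewrite /psi.
set u := F m.+2 i.+1 false y; set v := F m.+2 i.+1 true y.
set A := Gm m.+2 i true u; set B := Gm m.+2 i false v.
have hA : F m.+2 i.+1 true A = u := (fc_cn_same G m.+2 i true u H1 ltac:(lia)).2.
have hB : F m.+2 i.+1 false B = v := (fc_cn_same G m.+2 i false v H1 ltac:(lia)).2.
have [e1 e2] := fc_cp_eq G m.+2 i.+1 A y isT ltac:(lia) hA.
have h2 : F m.+2 i.+1 true (P m.+2 i.+1 A y) = F m.+2 i.+1 false B by rewrite e2 hB.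
rewrite (fc_cp_gt G m.+1 r i.+1 a _ _ isT H2 H3 h2).
rewrite (fc_cp_gt G m.+1 r i.+1 a _ _ isT H2 H3 hA).
rewrite /A /B (fc_cn_gt G m.+1 r i a true u H1 H2 H3) (fc_cn_gt G m.+1 r i a false v H1 H2 H3).
rewrite /u /v -!(fc_fc G m.+1 i.+1 r) //; lia.
Qed.

Lemma psi_face_keep m i r a (y : C G m.+2) : 1 <= i -> i.+1 < r -> r <= m.+2 ->
  (forall b, Deg r.-1 m.+1 (F m.+1 r b y)) ->
  F m.+1 r a (psi G m i y) = F m.+1 r a y.
Proof.
case: m y => [|m] y H1 H2 H3 HD; first by lia.
rewrite psi_face_gt //.
apply: psi_fix; try lia.
move=> b.
have := Deg_face_low b (HD a) (i := i.+1) isT ltac:(lia).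
move=> Hd.
apply: (Deg_dg Hd); lia.
Qed.

Lemma Psi_SS n k (y : C G n.+2) :
  Psi G n.+2 k.+2 y = psi G n k.+1 (Psi G n.+2 k.+1 y).
Proof. by []. Qed.

Lemma Psi_keep m r k a (y : C G m.+2) : 2 <= r -> r <= m.+2 -> k < r ->
  (forall b, Deg r.-1 m.+1 (F m.+1 r b y)) ->
  F m.+1 r a (Psi G m.+2 k y) = F m.+1 r a y.
Proof.
move=> H1 H2 H3 HD.
elim: k a H3 => [//|[//|k] IH] a Hk.
rewrite Psi_SS psi_face_keep //; try lia.
all: try (apply: IH; lia).
move=> b; rewrite IH //; lia.
Qed.

Lemma PhiAux_S n k (y : C G n) : PhiAux G n k.+1 y = PhiAux G n k (Psi G n k.+1 y).
Proof. by []. Qed.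

Lemma PhiAux_keep m r k a (y : C G m.+2) : 2 <= r -> r <= m.+2 -> k < r ->
  (forall b, Deg r.-1 m.+1 (F m.+1 r b y)) ->
  F m.+1 r a (PhiAux G m.+2 k y) = F m.+1 r a y.
Proof.
move=> H1 H2.
elim: k y a => [//|k IH] y a Hk HD.
rewrite PhiAux_S IH; [rewrite Psi_keep //; lia | lia | move=> b; rewrite Psi_keep //; lia].
Qed.

Lemma Psi_claim m i a (x : C G m.+2) : i.+2 <= m.+2 ->
  Deg i.+1 m.+1 (F m.+1 i.+2 a (Psi G m.+2 i.+2 x)).
Proof.
elim: i a => [|i IH] a Hi.
  rewrite Psi_SS psi_face_eq //; try lia.
  by apply: Deg_dg_up.
rewrite Psi_SS psi_face_eq //; try lia.
apply: Deg_dg_up.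
apply: Deg_face_high; [apply: IH; lia | lia | lia].
Qed.

Lemma Kp_Phi n (x : C G n) : Kp (Phi G n x).
Proof.
case: n x => [|[|m]] x //=.
rewrite /Phi.
suff: forall k, k <= m.+2 -> forall (x : C G m.+2) i a, i.+2 <= k ->
   Deg i.+1 m.+1 (F m.+1 i.+2 a (PhiAux G m.+2 k x)).
  by move=> H i a Hi; apply: H.
elim=> [|k IH] Hk x0 i a Hi; first by lia.
rewrite PhiAux_S.
case: (ltnP i.+2 k.+1) => Hik.
  apply: IH; lia.
have Ek : k = i.+1 by lia.
subst k.
rewrite PhiAux_keep //; try lia.
  exact: Psi_claim.
move=> b; exact: Psi_claim.
Qed.
Lemma psiG_fix n i (y : C G n) : Kp y -> 1 <= i -> i < n -> psiG G n i y = y.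
Proof.
case: n y => [|[|m]] y //= HK H1 H2.
apply: psi_fix; try lia.
move=> a.
have Hd : Deg i m.+1 (F m.+1 i.+1 a y).
  case: i H1 H2 => [//|i] _ H2; apply: HK; lia.
apply: (Deg_dg Hd); lia.
Qed.

Lemma Psi_fix n r (y : C G n) : Kp y -> r <= n -> Psi G n r y = y.
Proof.
move=> HK; elim: r => [//|[//|r] IH] Hr.
have -> : Psi G n r.+2 y = psiG G n r.+1 (Psi G n r.+1 y) by [].
rewrite IH; last lia.
apply: psiG_fix => //; lia.
Qed.

Lemma PhiImage_iff n (y : C G n) : PhiImage G n y <-> Kp y.
Proof.
split.
  by move=> [x <-]; apply: Kp_Phi.
move=> HK; exists y; rewrite /Phi.
suff H : forall k, k <= n -> PhiAux G n k y = y by apply: H.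
elim=> [//|k IH] Hk.
rewrite PhiAux_S Psi_fix //; apply: IH; lia.
Qed.
Lemma collapse_SS k m a (x : C G m.+1) :
  collapse G k.+1 m.+1 a x = D m 1 (collapse G k m a (F m 1 a x)).
Proof. by []. Qed.

Lemma Kp_face1 m a (x : C G m.+1) : Kp x -> Kp (F m 1 a x).
Proof.
case: m x => [//|m] x HK i b Hi.
rewrite -(fc_fc G m 1 i.+3 a b x) //; try lia.
have := Deg_face_low a (HK i.+1 b ltac:(lia)) (i := 1) isT ltac:(lia).
by [].
Qed.

Lemma Kp_F2 m a b (x : C G m.+2) : Kp x ->
  F m 1 b (F m.+1 1 a x) = F m 1 b (F m.+1 1 b x).
Proof.
move=> HK.
rewrite -(fc_fc G m 1 2 a b x) //; try lia.
rewrite -(fc_fc G m 1 2 b b x) //; try lia.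
have [w [-> _]] := HK 0 b isT.
by rewrite !(fc_dg_eq G m 1).
Qed.

Lemma collapse_K j m a (x : C G m.+1) : Kp x -> 1 <= j -> j <= m.+1 ->
  collapse G j m.+1 a x = D m j (F m j a x).
Proof.
elim: j m x => [|k IH] m x HK H1 H2; first by lia.
rewrite collapse_SS.
case: k IH H1 H2 => [|k] IH H1 H2; first by [].
case: m x HK H2 => [|m] x HK H2; first by lia.
rewrite IH //; try lia; last exact: Kp_face1.
rewrite -(fc_fc G m 1 k.+2 a a x) //; try lia.
rewrite (dg_dg G m 1 k.+1) //; try lia.
have [w [E _]] := HK k a ltac:(lia).
by rewrite E (fc_dg_eq G m 1).
Qed.

Lemma CC2 l k m a b (x : C G m) : l <= k ->
  collapse G l m b (collapse G k m a x) = collapse G k m a x.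
Proof.
elim: l k m x => [//|l IH] [|k] [|m] x Hlk //. all: try lia.
rewrite !collapse_SS (fc_dg_eq G m 1) //; try lia.
by rewrite IH.
Qed.

Lemma CC1 k l m a b (x : C G m) : Kp x -> k < l -> l <= m ->
  collapse G l m b (collapse G k m a x) = collapse G l m b x.
Proof.
elim: k l m x => [//|k IH] [|l] [|m] x HK Hkl Hlm //; try lia.
rewrite !collapse_SS (fc_dg_eq G m 1) //; try lia.
rewrite IH //; try lia; last exact: Kp_face1.
case: l Hkl Hlm IH => [|l] Hkl Hlm IH; first by lia.
case: m x HK Hlm IH => [|m] x HK Hlm IH; first by lia.
by rewrite !collapse_SS Kp_F2.
Qed.

Lemma Kp_dg1 n (x : C G n) : Kp x -> Kp (D n 1 x).
Proof.
case: n x => [|n] x HK i a Hi; first by lia.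
rewrite (fc_dg_gt G n i.+2 1 a x) //; try lia.
exists (F n i.+1 a x); split => //.
case: i Hi => [//|i] Hi.
apply: HK; lia.
Qed.

Lemma Kp_collapse k n a (x : C G n) : Kp x -> Kp (collapse G k n a x).
Proof.
elim: k n x => [//|k IH] [//|m] x HK.
rewrite collapse_SS; apply: Kp_dg1; apply: IH; exact: Kp_face1.
Qed.

Lemma Kp_comp m j (x y : C G m.+1) : Kp x -> Kp y -> 1 <= j -> j <= m.+1 ->
  F m j true x = F m j false y -> Kp (P m j x y).
Proof.
case: m x y => [|m] x y HKx HKy H1 H2 Exy i a Hi; first by lia.
case: (ltngtP i.+2 j) => Hij.
- rewrite (fc_cp_lt G m i.+2 j a x y) //.
  apply: Deg_comp; try lia.
  + exact: HKx.
  + exact: HKy.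
  rewrite -!(fc_fc G m i.+2 j) //; try lia.
  by rewrite Exy.
- rewrite (fc_cp_gt G m i.+2 j a x y) //.
  rewrite (Deg_comp_idem (k := i.+1)); try lia.
  + exact: HKx.
  + exact: HKx.
  + exact: HKy.
  rewrite !(fc_fc G m j i.+2) //; try lia.
  by rewrite Exy.
- subst j.
  have [e1 e2] := fc_cp_eq G m.+1 i.+2 x y isT H2 Exy.
  case: a; [rewrite e2; exact: HKy | rewrite e1; exact: HKx].
Qed.
Section Main.
Variable m : nat.
Local Notation K := (@Kp m.+1).
Local Notation d := (dPhi G m.+1).
Local Notation c := (compPhi G m.+1).

Lemma c1 p a x : K x -> K (d p a x).
Proof. rewrite /dPhi; case: (p < m.+1) => // HK; exact: Kp_collapse. Qed.

Lemma c2 p x y z : K x -> K y -> c p x y z -> K z.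
Proof.
rewrite /compPhi; case Hp: (p < m.+1) => HKx HKy [E ->] //.
apply: Kp_comp => //; lia.
Qed.

Lemma c3 p x y z z' : c p x y z -> c p x y z' -> z = z'.
Proof. rewrite /compPhi; case: (p < m.+1) => [[_ ->] [_ ->]|[_ ->] [_ ->]] //. Qed.

Lemma c4 p x y : K x -> K y -> ((exists z, c p x y z) <-> d p true x = d p false y).
Proof.
rewrite /compPhi /dPhi /=; case Hp: (p < m.+1) => HKx HKy.
  rewrite !collapse_K //; try lia.
  split.
    by move=> [z [E _]]; rewrite E.
  move/dg_inj => E; exists (P m (m.+1 - p) x y); split => //.
  apply: E; lia.
split; first by move=> [z [E _]].
by move=> E; exists x.
Qed.

Lemma c5 p q a b x : K x -> q < p -> d q b (d p a x) = d q b x.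
Proof.
rewrite /dPhi => HK Hqp.
case Hp: (p < m.+1); last by [].
have -> : q < m.+1 by lia.
rewrite CC1 //; lia.
Qed.

Lemma c6 p q a b x : p <= q -> d q b (d p a x) = d p a x.
Proof.
rewrite /dPhi => Hpq.
case Hp: (p < m.+1); case Hq: (q < m.+1) => //; try lia.
rewrite CC2 //; lia.
Qed.

Lemma c7 p x y z : K x -> K y -> c p x y z ->
  d p false z = d p false x /\ d p true z = d p true y.
Proof.
move=> HKx HKy Hc.
have HKz := c2 HKx HKy Hc.
move: Hc; rewrite /compPhi /dPhi /=; case Hp: (p < m.+1) => /=; last by move=> [-> ->].
move=> [E Ez].
rewrite !collapse_K //; try lia.
have [e1 e2] := fc_cp_eq G m (m.+1 - p) x y ltac:(lia) ltac:(lia) E.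
by rewrite Ez e1 e2.
Qed.

Lemma c8 p q b x y z : K x -> K y -> c p x y z -> q != p ->
  c p (d q b x) (d q b y) (d q b z).
Proof.
move=> HKx HKy Hc Hqp.
have HKz := c2 HKx HKy Hc.
move: Hc; rewrite /compPhi /dPhi /=.
case Hp: (p < m.+1) => /=; last by move=> [-> ->]; case: (q < m.+1).
move=> [E Ez].
case Hq: (q < m.+1) => //.
rewrite !collapse_K //; try lia.
subst z.
set j := m.+1 - p in E *; set l := m.+1 - q.
have Hj1 : 1 <= j by lia. have Hj2 : j <= m.+1 by lia.
have Hl1 : 1 <= l by lia. have Hl2 : l <= m.+1 by lia.
have Hjl : j != l by rewrite /j /l; apply/eqP; move/eqP: Hqp; lia.
clearbody j l.
case: m x y HKx HKy E HKz Hj2 Hl2 Hjl Hp Hq => [|m'] x y HKx HKy E HKz Hj2 Hl2 Hjl Hp Hq.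
  by lia.
case: (ltngtP l j) => Hlj; last by move/eqP: Hjl; lia.
- have Ef : F m' j.-1 true (F m'.+1 l b x) = F m' j.-1 false (F m'.+1 l b y).
    by rewrite -!(fc_fc G m' l j) // E.
  rewrite !(fc_dg_gt G m' j l) //; try lia.
  split; first by rewrite Ef.
  rewrite (fc_cp_lt G m' l j b x y) //; try lia.
  rewrite (dg_cp_le G m' l j.-1) //; try lia.
  by rewrite prednK //; lia.
- have Ef : F m' j true (F m'.+1 l b x) = F m' j false (F m'.+1 l b y).
    by rewrite !(fc_fc G m' j l) // E.
  rewrite !(fc_dg_lt G m' j l) //; try lia.
  split; first by rewrite Ef.
  rewrite (fc_cp_gt G m' l j b x y) //; try lia.
  rewrite (dg_cp_gt G m' l j) //; lia.
Qed.
Lemma c9 p x : K x -> c p (d p false x) x x /\ c p x (d p true x) x.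
Proof.
move=> HK; rewrite /compPhi /dPhi /=; case Hp: (p < m.+1) => //=.
rewrite !collapse_K //; try lia.
rewrite !(fc_dg_eq G m) //; try lia.
split; split => //.
  by rewrite (cp_unit G m (m.+1 - p) x ltac:(lia) ltac:(lia)).1.
by rewrite (cp_unit G m (m.+1 - p) x ltac:(lia) ltac:(lia)).2.
Qed.

Lemma c10 p x y z xy yz : c p x y xy -> c p y z yz ->
  exists w, c p xy z w /\ c p x yz w.
Proof.
rewrite /compPhi /=; case Hp: (p < m.+1) => /=; last first.
  by move=> [-> ->] [-> ->]; exists z.
move=> [E1 ->] [E2 ->].
have [e1 e2] := fc_cp_eq G m (m.+1 - p) x y ltac:(lia) ltac:(lia) E1.
have [e3 e4] := fc_cp_eq G m (m.+1 - p) y z ltac:(lia) ltac:(lia) E2.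
exists (P m (m.+1 - p) (P m (m.+1 - p) x y) z); split; split => //.
  by rewrite e2.
  by rewrite e3.
by rewrite (cp_assoc G) //; lia.
Qed.

Lemma c11 p q x y x' y' xy x'y' w xx' yy' w' : p != q ->
  c p x y xy -> c p x' y' x'y' -> c q xy x'y' w ->
  c q x x' xx' -> c q y y' yy' -> c p xx' yy' w' -> w = w'.
Proof.
move=> Hpq; rewrite /compPhi /=.
case Hp: (p < m.+1); case Hq: (q < m.+1) => /=.
- move=> [E1 ->] [E2 ->] [_ ->] [E3 ->] [E4 ->] [_ ->].
  rewrite (cp_interchange G) //; try lia.
all: by move=> [? ?] [? ?] [? ?] [? ?] [? ?] [? ?]; subst.
Qed.

End Main.

Lemma dim_ex (X : Type) (dd : nat -> bool -> X -> X) x N :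
  (forall p q a b, p <= q -> dd q b (dd p a x) = dd p a x) ->
  (forall a, dd N a x = x) ->
  exists m, forall p a, dd p a x = x <-> m <= p.
Proof.
move=> H6.
have up : forall p q, p <= q -> (forall a, dd p a x = x) -> forall b, dd q b x = x.
  by move=> p q Hpq Hp b; rewrite -{1}(Hp true) H6 // Hp.
have one : forall p a, dd p a x = x -> forall b, dd p b x = x.
  by move=> p a Hp b; rewrite -Hp H6.
elim: N => [|N IH] HN.
  exists 0 => p a; split => // _; exact: up HN a.
case: (classic (forall a, dd N a x = x)) => HN'.
  exact: IH.
exists N.+1 => p a; split.
  move=> Hpa; case: (ltnP N p) => // Hle.
  exfalso; apply: HN'; apply: (up p N Hle); exact: one Hpa.
move=> Hle; exact: up HN a.
Qed.

Lemma h2 n p a (x : C G n) : D n 1 (dPhi G n p a x) = dPhi G n.+1 p a (D n 1 x).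
Proof.
rewrite /dPhi; case: (ltngtP p n) => H.
- have -> : p < n.+1 by lia.
  rewrite subSn; last lia.
  by rewrite collapse_SS (fc_dg_eq G n 1).
- have -> : p < n.+1 = false by lia.
  by [].
- subst p; rewrite ltnSn subSnn.
  by rewrite collapse_SS (fc_dg_eq G n 1).
Qed.

Lemma h3 n p (x y z : C G n) : compPhi G n p x y z ->
  compPhi G n.+1 p (D n 1 x) (D n 1 y) (D n 1 z).
Proof.
case: n x y z => [|m] x y z /=.
  move=> [-> ->]; case: p => [|p] //=.
  rewrite subn0.
  rewrite !(fc_dg_eq G 0 1) //; split => //.
  have U : P 0 1 (D 0 1 y) (D 0 1 y) = D 0 1 y.
    by have := (cp_unit G 0 1 (D 0 1 y) isT isT).1; rewrite (fc_dg_eq G 0 1).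

  by rewrite U.
case Hp: (p < m.+1) => /=.
  move=> [E ->].
  have -> : p < m.+2 by lia.
  rewrite subSn; last lia.
  rewrite !(fc_dg_gt G m (m.+1 - p).+1 1) //; try lia.
  rewrite E; split => //.
  rewrite (dg_cp_le G m 1 (m.+1 - p)) //; lia.
move=> [-> ->].
case: (ltnP p m.+2) => Hp2 //.
have -> : m.+2 - p = 1 by lia.
rewrite !(fc_dg_eq G m.+1 1) //; split => //.
have U : P m.+1 1 (D m.+1 1 y) (D m.+1 1 y) = D m.+1 1 y.
    by have := (cp_unit G m.+1 1 (D m.+1 1 y) isT isT).1; rewrite (fc_dg_eq G m.+1 1).

by rewrite U.
Qed.

Lemma omega_K n : omega_cat (@Kp n) (dPhi G n) (compPhi G n).
Proof.
case: n => [|m].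
  have d0 : forall p a (x : C G 0), dPhi G 0 p a x = x.
    by move=> *; rewrite /dPhi ltn0.
  rewrite /omega_cat /compPhi.
  split; first by [].
  split; first by [].
  split; first by move=> p x y z z' _ _ [_ ->] [_ ->].
  split; first by move=> p x y _ _; rewrite !d0; split; [move=> [z [E _]] | move=> E; exists x].
  split; first by move=> *; rewrite !d0.
  split; first by move=> *; rewrite !d0.
  split; first by move=> p x y z _ _ [-> ->]; rewrite !d0.
  split; first by move=> p q b x y z _ _ [-> ->]; rewrite !d0.
  split; first by move=> p x _; rewrite !d0.
  split; first by move=> p x y z xy yz _ _ _ [-> ->] [-> ->]; exists z.
  split; first by move=> p q x y x' y' xy x'y' w xx' yy' w' _ _ _ _ _ [-> ->] [-> ->] [_ ->] [_ ->] [_ ->] [_ ->].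
  by move=> x _; exists 0 => p a; rewrite d0.
split; first by move=> p a x Hx; apply: c1.
split; first by move=> p x y z Hx Hy Hc; apply: c2 Hc.
split; first by move=> p x y z z' _ _; apply: c3.
split; first by move=> p x y Hx Hy; apply: c4.
split; first by move=> p q a b x Hx Hqp; apply: c5.
split; first by move=> p q a b x Hx Hpq; apply: c6.
split; first by move=> p x y z Hx Hy Hc; apply: c7 Hc.
split; first by move=> p q b x y z Hx Hy Hc Hqp; apply: c8 Hc Hqp.
split; first by move=> p x Hx; apply: c9.
split; first by move=> p x y z xy yz _ _ _; apply: c10.
split; first by move=> p q x y x' y' xy x'y' w xx' yy' w' Hpq _ _ _ _; apply: c11.
move=> x Hx; apply: (dim_ex (N := m.+1)).
  by move=> p q a b Hpq; apply: c6.
by move=> a; rewrite /dPhi ltnn.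
Qed.
End S.

From Stdlib Require Import FunctionalExtensionality PropExtensionality.

Theorem theorem3p8 (G : cubical_omega_cat) (n : nat) :
  omega_cat (PhiImage G n) (dPhi G n) (compPhi G n) /\
  omega_hom (PhiImage G n) (dPhi G n) (compPhi G n)
            (PhiImage G n.+1) (dPhi G n.+1) (compPhi G n.+1)
            (dg G n 1).
Proof.
have E : forall k, PhiImage G k = @Kp G k.
  move=> k; apply: functional_extensionality => y.
  apply: propositional_extensionality; exact: PhiImage_iff.
rewrite !E; split; first exact: omega_K.
split; first by move=> x Hx; apply: Kp_dg1.
split; first by move=> p a x _; apply: h2.
by move=> p x y z _ _; apply: h3.
Qed.
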